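(* Let $(\mathbb{F}(\alpha,\beta),\sigma)$ be a bivariate difference field extension of a difference field $(\mathbb{F},\sigma)$, and let $g\in\mathbb{F}(\alpha,\beta)$ be a nonzero rational function. Suppose $$\frac{\sigma g}{g}=\frac{p}{q},$$ where $p,q\in\mathbb{F}[\alpha,\beta]$ are nonzero polynomials with $\gcd(p,q)=1$. Then either $p,q\in\mathbb{F}$, or $\mathrm{Spr}_\sigma(p,q)\cup\mathrm{Spr}_\sigma(q,p)\neq\emptyset$.
   Context: A bivariate difference field extension $(\mathbb{F}(\alpha,\beta),\sigma)$ of a difference field $(\mathbb{F},\sigma)$ is the rational function field $\mathbb{F}(\alpha,\beta)$ in two algebraically independent transcendental elements $\alpha,\beta$ over $\mathbb{F}$, together with an automorphism $\sigma$ of $\mathbb{F}(\alpha,\beta)$ extending $\sigma$ on $\mathbb{F}$ and satisfying $\sigma(\alpha)=\beta$, $\sigma(\beta)=u\alpha+v\beta$ with $v\in\mathbb{F}$, $u\in\mathbb{F}\setminus\{0\}$. $\deg$ denotes total degree in $\alpha,\beta$. For nonzero $p,q\in\mathbb{F}[\alpha,\beta]$, the spread is $\mathrm{Spr}_\sigma(p,q)=\{m\in\mathbb{N} : \deg(\gcd(p,\sigma^m q))>0\}$. *)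

(* Defs.v *)
From HB Require Import structures.
From mathcomp Require Import all_boot all_order all_algebra.
From mathcomp Require Import fraction generic_quotient.
From mathcomp Require Import mpoly.
Set Implicit Arguments. Unset Strict Implicit. Unset Printing Implicit Defensive.
Import Order.TTheory GRing.Theory.
Local Open Scope ring_scope.

Notation "x %:F" := (@FracField.tofrac _ x) : ring_scope.

Definition alpha (F : fieldType) : {mpoly F[2]} := 'X_(0 : 'I_2).
Definition beta (F : fieldType) : {mpoly F[2]} := 'X_(1 : 'I_2).

Definition sigma_var (F : fieldType) (u v : F) (i : 'I_2) : {mpoly F[2]} :=
  if i == 0 then beta F else u%:MP * alpha F + v%:MP * beta F.

Definition sigmaP (F : fieldType) (s : F -> F) (u v : F) (p : {mpoly F[2]})
  : {mpoly F[2]} :=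
  mmap (fun c => (s c)%:MP) (sigma_var u v) p.

Definition sigmaR (F : fieldType) (s : F -> F) (u v : F)
  (g : {fraction {mpoly F[2]}}) : {fraction {mpoly F[2]}} :=
  let r := repr g in
  (sigmaP s u v (\n_r))%:F / (sigmaP s u v (\d_r))%:F.

Definition tdeg (F : fieldType) (p : {mpoly F[2]}) : nat := (msize p).-1.

Definition mdvd (F : fieldType) (d p : {mpoly F[2]}) : Prop :=
  exists r : {mpoly F[2]}, p = r * d.

Definition gcd_deg_pos (F : fieldType) (p q : {mpoly F[2]}) : Prop :=
  exists d : {mpoly F[2]}, (0 < tdeg d)%N /\ mdvd d p /\ mdvd d q.

Definition coprime_mp (F : fieldType) (p q : {mpoly F[2]}) : Prop :=
  forall d : {mpoly F[2]}, mdvd d p -> mdvd d q -> tdeg d = 0%N.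

Definition in_Spr (F : fieldType) (s : F -> F) (u v : F) (p q : {mpoly F[2]})
  (m : nat) : Prop :=
  gcd_deg_pos p (iter m (sigmaP s u v) q).

Definition is_const (F : fieldType) (p : {mpoly F[2]}) : Prop :=
  exists c : F, p = c%:MP.

(* Main.v *)
Require Import Defs.
From HB Require Import structures.
From mathcomp Require Import all_boot all_order all_algebra.
From mathcomp Require Import fraction generic_quotient.
From mathcomp Require Import mpoly.
From mathcomp Require Import ring zify.
From Stdlib Require Import Classical.
Set Implicit Arguments. Unset Strict Implicit. Unset Printing Implicit Defensive.
Import Order.TTheory GRing.Theory.
Local Open Scope ring_scope.
Section PolyPoly.
Variable F : fieldType.
Local Notation A := {poly F}.
Local Notation B := {poly {poly F}}.

Definition cd (pi : A) (P : B) := exists P' : B, P = pi%:P * P'.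

Lemma cd0 pi : cd pi 0. Proof. by exists 0; rewrite mulr0. Qed.
Lemma cdD pi P Q : cd pi P -> cd pi Q -> cd pi (P + Q).
Proof. by move=> [P' ->] [Q' ->]; exists (P' + Q'); rewrite mulrDr. Qed.
Lemma cdB pi P Q : cd pi P -> cd pi Q -> cd pi (P - Q).
Proof. by move=> [P' ->] [Q' ->]; exists (P' - Q'); rewrite mulrBr. Qed.
Lemma cdMr pi P Q : cd pi P -> cd pi (P * Q).
Proof. by move=> [P' ->]; exists (P' * Q); rewrite mulrA. Qed.
Lemma cd_coef pi P i : cd pi P -> pi %| P`_i.
Proof. by move=> [P' ->]; rewrite coefCM dvdp_mulIl. Qed.

Lemma A_prime (pi x y : A) : irreducible_poly pi -> pi %| x * y -> (pi %| x) || (pi %| y).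
Proof.
move=> Hpi Hxy; case Hx: (pi %| x) => //=.
have Hc : coprimep pi x by rewrite irreducible_poly_coprime // Hx.
by rewrite -(Gauss_dvdpr y Hc).
Qed.

Lemma lead_split (P : B) :
  P = \poly_(i < (size P).-1) P`_i + (lead_coef P)%:P * 'X^((size P).-1).
Proof.
apply/polyP => i; rewrite coefD coef_poly coefCM coefXn.
case: (ltnP i (size P).-1) => H.
  by rewrite (ltn_eqF H) mulr0 addr0.
case: (eqVneq i (size P).-1) => [->|ne]; first by rewrite mulr1 add0r lead_coefE.
rewrite mulr0 addr0 nth_default //.
have H' : ((size P).-1 < i)%N by rewrite ltn_neqAle eq_sym ne H.
exact: leq_trans (leqSpred _) H'.
Qed.

Lemma cd_lead pi (P : B) : pi %| lead_coef P ->
  cd pi ((lead_coef P)%:P * 'X^((size P).-1)).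
Proof.
rewrite dvdp_eq => /eqP E.
exists ((lead_coef P %/ pi)%:P * 'X^((size P).-1)).
by rewrite {1}E polyCM; ring.
Qed.

Lemma G_aux (pi : A) : irreducible_poly pi -> forall n (P Q : B),
  (size P + size Q <= n)%N -> cd pi (P * Q) -> cd pi P \/ cd pi Q.
Proof.
move=> Hpi; elim=> [|n IH] P Q Hs Hc.
  left; have : size P = 0%N by lia.
  by move/eqP; rewrite size_poly_eq0 => /eqP ->; exact: cd0.
have [->|Pn0] := eqVneq P 0; first by left; apply: cd0.
have [->|Qn0] := eqVneq Q 0; first by right; apply: cd0.
have sP : (0 < size P)%N by rewrite lt0n size_poly_eq0.
have sQ : (0 < size Q)%N by rewrite lt0n size_poly_eq0.
case HP: (pi %| lead_coef P).
  have HT := cd_lead HP.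
  set P0 := \poly_(i < (size P).-1) P`_i.
  have EP := lead_split P; rewrite -/P0 in EP.
  set T := (lead_coef P)%:P * 'X^((size P).-1) in HT EP.
  have sP0 : (size P0 < size P)%N by apply: (leq_ltn_trans (size_poly _ _)); lia.
  have : cd pi (P0 * Q).
    have -> : P0 * Q = P * Q - T * Q by rewrite EP; ring.
    by apply: cdB => //; apply: cdMr.
  move/(IH P0 Q) => [|H|H]; [lia| |by right].
  by left; rewrite EP; apply: cdD.
case HQ: (pi %| lead_coef Q).
  have HT := cd_lead HQ.
  set Q0 := \poly_(i < (size Q).-1) Q`_i.
  have EQ := lead_split Q; rewrite -/Q0 in EQ.
  set T := (lead_coef Q)%:P * 'X^((size Q).-1) in HT EQ.
  have sQ0 : (size Q0 < size Q)%N by apply: (leq_ltn_trans (size_poly _ _)); lia.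
  have : cd pi (P * Q0).
    have -> : P * Q0 = P * Q - P * T by rewrite EQ; ring.
    apply: cdB => //; rewrite mulrC; apply: cdMr => //.
  move/(IH P Q0) => [|H|H]; [lia|by left|].
  by right; rewrite EQ; apply: cdD.
exfalso.
have := cd_coef (size (P * Q)).-1 Hc.
rewrite -lead_coefE lead_coefM => /(A_prime Hpi).
by rewrite HP HQ.
Qed.

Lemma G (pi : A) (P Q : B) : irreducible_poly pi -> cd pi (P * Q) -> cd pi P \/ cd pi Q.
Proof. by move=> Hpi; apply: (G_aux Hpi (leqnn _)). Qed.

Lemma irr_div (a : A) : (1 < size a)%N -> exists pi, irreducible_poly pi /\ pi %| a.
Proof.
move: {2}(size a) (leqnn (size a)) => n; elim: n a => [|n IH] a Hn Ha; first lia.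
case: (classic (irreducible_poly a)) => Hirr.
  by exists a; split => //; exact: dvdpp.
have [q [Hq1 [Hqa Hne]]] : exists q : A, size q != 1%N /\ q %| a /\ ~~ (q %= a).
  apply: NNPP => H; apply: Hirr; split => // q Hq Hqa.
  by apply/negPn/negP => Hn'; apply: H; exists q.
have a0 : a != 0 by rewrite -size_poly_eq0; lia.
have q0 : q != 0 by apply: contraTneq Hqa => ->; rewrite dvd0p.
have sq : (size q < size a)%N.
  rewrite ltn_neqAle dvdp_leq // andbT dvdp_size_eqp //.
have sq1 : (1 < size q)%N.
  move: Hq1; rewrite -size_poly_eq0 in q0; lia.
have [pi [Hpi Hpq]] := IH q ltac:(lia) sq1.
by exists pi; split => //; exact: dvdp_trans Hpq Hqa.
Qed.

Lemma irr_neq0 (pi : A) : irreducible_poly pi -> pi != 0.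
Proof. by case=> H _; rewrite -size_poly_gt0; exact: ltnW H. Qed.

Lemma unitA_size (a : A) : (a \is a GRing.unit) = (size a == 1%N).
Proof.
rewrite poly_unitE unitfE; case: eqP => //= H.
have : lead_coef a != 0 by rewrite lead_coef_eq0 -size_poly_eq0 H.
by rewrite lead_coefE H.
Qed.

Lemma unitB_size (P : B) : P \is a GRing.unit -> size P = 1%N.
Proof. by rewrite poly_unitE => /andP[/eqP]. Qed.

Lemma unitB_C (c : A) : (c%:P \is a GRing.unit) = (c \is a GRing.unit).
Proof.
rewrite poly_unitE size_polyC coefC /=.
by case: (eqVneq c 0) => [->|nz] //=; rewrite unitr0.
Qed.

Definition prim (P : B) := forall pi : A, irreducible_poly pi -> ~ cd pi P.

Lemma PC (P : B) : prim P -> forall n (a : A) (K X : B), (size a <= n)%N -> a != 0 ->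
  P * K = a%:P * X -> exists K', K = a%:P * K'.
Proof.
move=> HP; elim=> [|n IH] a K X Hs a0 HK.
  by move: a0; rewrite -size_poly_eq0; lia.
case: (ltnP 1 (size a)) => Ha.
  have [pi [Hpi Hdiv]] := irr_div Ha.
  move: Hdiv; rewrite dvdp_eq => /eqP Ha'.
  set a1 := a %/ pi in Ha'.
  have pi0 : pi != 0 by exact: irr_neq0 Hpi.
  have : cd pi (P * K) by exists (a1%:P * X); rewrite HK Ha' polyCM; ring.
  move/G => [//|H|[K1 HK1]]; first by exfalso; apply: (HP pi Hpi).
  have a10 : a1 != 0 by apply: contraNneq a0 => E; rewrite Ha' E mul0r.
  have HK' : P * K1 = a1%:P * X.
    apply: (mulfI (x := pi%:P)); first by rewrite polyC_eq0.
    have -> : pi%:P * (P * K1) = P * (pi%:P * K1) by ring.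
    by rewrite -HK1 HK Ha' polyCM; ring.
  have sa1 : (size a1 <= n)%N.
    move: Hs; rewrite Ha' size_mul //; case: Hpi => Hpi1 _.
    have := size_poly_gt0 a1; rewrite a10 => Hz.
    move: Hz Hpi1; set z1 := size a1; set z2 := size pi; lia.
  have [K' EK'] := IH a1 K1 X sa1 a10 HK'.
  by exists K'; rewrite HK1 EK' Ha' polyCM; ring.
have ua : a \is a GRing.unit by rewrite unitA_size; rewrite -size_poly_eq0 in a0; apply/eqP; lia.
exists ((a^-1)%:P * K).
by rewrite mulrA -polyCM divrr // mul1r.
Qed.

Definition irrB (f : B) := [/\ f != 0, f \isn't a GRing.unit &
  forall x y : B, f = x * y -> x \is a GRing.unit \/ y \is a GRing.unit].
Definition dvdB (d P : B) := exists r, P = r * d.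

Lemma irr_prim f : irrB f -> (1 < size f)%N -> prim f.
Proof.
move=> [f0 fu Hf] sf pi Hpi [f' Hf'].
have pi0 : pi != 0 by exact: irr_neq0 Hpi.
case: (Hf _ _ Hf') => H.
  by case: Hpi => H1 _; move: H; rewrite unitB_C unitA_size => /eqP E; rewrite E in H1.
have E : size f = size f' by rewrite Hf' size_Cmul.
by move: sf; rewrite E (unitB_size H).
Qed.

Lemma irr_const f : irrB f -> (size f <= 1)%N ->
  irreducible_poly f`_0 /\ f = (f`_0)%:P.
Proof.
move=> [f0 fu Hf] sf.
have Ef : f = (f`_0)%:P by apply: size1_polyC.
split => //; set c := f`_0 in Ef *.
have c0 : c != 0 by apply: contraNneq f0 => E; rewrite Ef E.
split.
  case: (ltnP 1 (size c)) => // H; exfalso.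
  have : c \is a GRing.unit by rewrite unitA_size; rewrite -size_poly_eq0 in c0; apply/eqP; lia.
  by rewrite -unitB_C -Ef (negbTE fu).
move=> q q1 qc.
move: (qc); rewrite dvdp_eq => /eqP Hc.
have : f = (c %/ q)%:P * q%:P by rewrite Ef {1}Hc polyCM.
case/Hf => H.
  rewrite unitB_C in H.
  rewrite /eqp qc /=; apply/dvdpP; exists ((c %/ q)^-1).
  by rewrite [X in _ * X]Hc mulrA mulVr // mul1r.
by move: H; rewrite unitB_C unitA_size (negbTE q1).
Qed.

Lemma ring1 (R : comRingType) (C L f Q r la mu g : R) :
  C * r = la * f + mu * g -> C * (L * f - Q * r) = (C * L - Q * la) * f + - (Q * mu) * g.
Proof. by move=> H; transitivity (C * L * f - Q * (C * r)); [ring|rewrite H; ring]. Qed.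
Lemma ring2 (R : comRingType) (C L f Q r la mu g : R) :
  C * r = la * f + mu * g -> C * (L * g - Q * r) = - (Q * la) * f + (C * L - Q * mu) * g.
Proof. by move=> H; transitivity (C * L * g - Q * (C * r)); [ring|rewrite H; ring]. Qed.

Section Key.
Variables (f g h : B) (Hirr : irrB f) (Hs : (1 < size f)%N) (Hgh : dvdB f (g * h)).

Definition inS (r : B) := exists (c : A) (l m : B), c != 0 /\ c%:P * r = l * f + m * g.

Lemma key n : forall r : B, (size r <= n)%N -> r != 0 -> inS r -> dvdB f g \/ dvdB f h.
Proof.
elim: n => [|n IHn] r Hsr.
  by move: Hsr; rewrite leqn0 size_poly_eq0 => /eqP-> /eqP.
move: {2}(size (lead_coef r)) (leqnn (size (lead_coef r))) => l.
elim: l r Hsr => [|l IHl] r Hsr Hl r0 [c [la [mu [c0 Hc]]]].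
  by move: Hl; rewrite leqn0 size_poly_eq0 lead_coef_eq0 (negbTE r0).
case: (ltnP 1 (size r)) => Hr; last first.
  have Hr1 : r = (r`_0)%:P by apply: size1_polyC.
  set r0c := r`_0 in Hr1.
  have r00 : r0c != 0 by apply: contraNneq r0 => E; rewrite Hr1 E.
  move: Hgh => [k Hk]; right.
  have H : f * (la * h + mu * k) = (c * r0c)%:P * h.
    rewrite polyCM -Hr1 Hc.
    transitivity (la * f * h + mu * (g * h)); first by rewrite Hk; ring.
    by ring.
  have [K' HK'] := PC (irr_prim Hirr Hs) (leqnn _) (mulf_neq0 c0 r00) H.
  exists K'; apply: (mulfI (x := (c * r0c)%:P)).
    by rewrite polyC_eq0 mulf_neq0.
  by rewrite -H HK'; ring.
case: (classic (exists pi, irreducible_poly pi /\ cd pi r)) =>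
  [[pi [Hpi [r' Hr']]]|Hprim].
  have pi0 : pi != 0 by exact: irr_neq0 Hpi.
  have r'0 : r' != 0 by apply: contraNneq r0 => E; rewrite Hr' E mulr0.
  have Esz : size r = size r' by rewrite Hr' size_Cmul.
  have Elc : lead_coef r = pi * lead_coef r' by rewrite Hr' lead_coefM lead_coefC.
  have lc0 : lead_coef r' != 0 by rewrite lead_coef_eq0.
  apply: (IHl r').
  - by rewrite -Esz.
  - move: Hl; rewrite Elc size_mul //; case: Hpi => Hpi1 _.
    have := size_poly_gt0 (lead_coef r'); rewrite lc0 => Hz.
    move: Hz Hpi1; set z1 := size (lead_coef r'); set z2 := size pi; lia.
  - exact: r'0.
  - exists (c * pi), la, mu; split; first by rewrite mulf_neq0.
    by rewrite polyCM -mulrA -Hr'.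
have Hpr : prim r by move=> pi Hpi Hc'; apply: Hprim; exists pi.
set lc := lead_coef r.
have lc0 : lc != 0 by rewrite lead_coef_eq0.
have Ef := Pdiv.Idomain.divp_eq f r.
have Eg := Pdiv.Idomain.divp_eq g r.
set kf := Pdiv.Idomain.scalp f r in Ef.
set kg := Pdiv.Idomain.scalp g r in Eg.
set Qf := Pdiv.Idomain.divp f r in Ef.
set Qg := Pdiv.Idomain.divp g r in Eg.
set mf := Pdiv.Idomain.modp f r in Ef.
set mg := Pdiv.Idomain.modp g r in Eg.
rewrite -mul_polyC in Ef; rewrite -mul_polyC in Eg.
have smf : (size mf < size r)%N by rewrite /mf Pdiv.Idomain.ltn_modp.
have smg : (size mg < size r)%N by rewrite /mg Pdiv.Idomain.ltn_modp.
case: (eqVneq mf 0) => Hmf; last first.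
  apply: (IHn mf); [by rewrite -ltnS; exact: leq_trans smf Hsr|exact: Hmf|].
  exists c, ((c * lc ^+ kf)%:P - Qf * la), (- (Qf * mu)); split => //.
  have -> : mf = (lc ^+ kf)%:P * f - Qf * r by rewrite Ef; ring.
  by rewrite polyCM; apply: ring1.
case: (eqVneq mg 0) => Hmg; last first.
  apply: (IHn mg); [by rewrite -ltnS; exact: leq_trans smg Hsr|exact: Hmg|].
  exists c, (- (Qg * la)), ((c * lc ^+ kg)%:P - Qg * mu); split => //.
  have -> : mg = (lc ^+ kg)%:P * g - Qg * r by rewrite Eg; ring.
  by rewrite polyCM; apply: ring2.
rewrite Hmf addr0 in Ef; rewrite Hmg addr0 in Eg.
have lcf0 : lc ^+ kf != 0 by rewrite expf_neq0.
have lcg0 : lc ^+ kg != 0 by rewrite expf_neq0.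
have E1 : r * Qf = (lc ^+ kf)%:P * f by rewrite Ef mulrC.
have E2 : r * Qg = (lc ^+ kg)%:P * g by rewrite Eg mulrC.
have [K HK] := PC Hpr (leqnn _) lcf0 E1.
have [K2 HK2] := PC Hpr (leqnn _) lcg0 E2.
have Hf' : f = K * r.
  apply: (mulfI (x := (lc ^+ kf)%:P)); first by rewrite polyC_eq0.
  by rewrite Ef HK mulrA.
have Hg' : g = K2 * r.
  apply: (mulfI (x := (lc ^+ kg)%:P)); first by rewrite polyC_eq0.
  by rewrite Eg HK2 mulrA.
case: Hirr => _ _ Hf3.
case: (Hf3 _ _ Hf') => HKu; last first.
  by have := unitB_size HKu; lia.
left; exists (K2 * K^-1).
by rewrite Hf' Hg' mulrA -(mulrA K2) mulVr // mulr1.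
Qed.
End Key.

Lemma primeB f g h : irrB f -> dvdB f (g * h) -> dvdB f g \/ dvdB f h.
Proof.
move=> Hirr Hgh.
case: (ltnP 1 (size f)) => Hs.
  have f0 : f != 0 by case: Hirr.
  apply: (key Hirr Hs Hgh (leqnn _) f0).
  by exists 1, 1, 0; rewrite oner_neq0 polyC1 !mul1r mul0r addr0.
have [Hc Hf] := irr_const Hirr Hs.
move: Hgh => [k Hk].
move: Hc Hf; set c := f`_0 => Hc Hf.
have : cd c (g * h) by exists k; rewrite Hk Hf mulrC.
case/(G Hc) => [[g' Hg']|[h' Hh']]; [left|right].
  by exists g'; rewrite Hg' Hf mulrC.
by exists h'; rewrite Hh' Hf mulrC.
Qed.

End PolyPoly.
Section Iso.
Variable F : fieldType.
Local Notation A := {poly F}.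
Local Notation B := {poly {poly F}}.
Local Notation R := {mpoly F[2]}.

Lemma ord2P (i : 'I_2) : i = 0 \/ i = 1.
Proof. by case: i => [[|[|k]] Hk] //; [left|right]; exact: val_inj. Qed.

Lemma mp_ext (T : nzRingType) (g1 g2 : {rmorphism R -> T}) :
  (forall c, g1 c%:MP = g2 c%:MP) -> (forall i, g1 'X_i = g2 'X_i) -> g1 =1 g2.
Proof.
move=> HC HX; elim/mpolyind => [|c m p _ _ IH]; first by rewrite !rmorph0.
rewrite !rmorphD IH -mul_mpolyC !rmorphM HC mpolyXE_id !rmorph_prod.
congr (_ * _ + _); apply: eq_bigr => i _; by rewrite !rmorphXn HX.
Qed.

Lemma B_ext (T : nzRingType) (g1 g2 : {rmorphism B -> T}) :
  g1 'X = g2 'X -> g1 ('X%:P) = g2 ('X%:P) ->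
  (forall c : F, g1 (c%:P%:P) = g2 (c%:P%:P)) -> g1 =1 g2.
Proof.
move=> HX HY HC.
have HA : forall a : A, g1 a%:P = g2 a%:P.
  elim/poly_ind => [|a c IH]; first by rewrite !rmorph0.
  by rewrite polyCD polyCM !rmorphD !rmorphM IH HY HC.
elim/poly_ind => [|P c IH]; first by rewrite !rmorph0.
by rewrite !rmorphD !rmorphM IH HX HA.
Qed.

Definition hphi (i : 'I_2) : B := if i == 0 then 'X else ('X)%:P.
Definition phi : {rmorphism R -> B} := mmap (@polyC A \o @polyC F) hphi.
Definition psi1 : {rmorphism A -> R} := horner_eval (beta F) \o map_poly (@mpolyC 2 F).
Definition psi : {rmorphism B -> R} := horner_eval (alpha F) \o map_poly psi1.

Lemma hphi0 : hphi 0 = 'X. Proof. by []. Qed.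
Lemma hphi1 : hphi 1 = 'X%:P. Proof. by []. Qed.
Lemma phiX i : phi 'X_i = hphi i.
Proof. by rewrite /= mmapX mmap1U. Qed.
Lemma phiC c : phi c%:MP = c%:P%:P.
Proof. by rewrite /= mmapC. Qed.

Lemma psiX : psi 'X = alpha F.
Proof. by rewrite /= map_polyX horner_evalE hornerX. Qed.
Lemma psiY : psi ('X%:P) = beta F.
Proof. by rewrite /= map_polyC horner_evalE hornerC /= horner_evalE map_polyX hornerX. Qed.
Lemma psiC c : psi (c%:P%:P) = c%:MP.
Proof. by rewrite /= map_polyC horner_evalE hornerC /= horner_evalE map_polyC hornerC. Qed.

Lemma psiphi x : psi (phi x) = x.
Proof.
have := @mp_ext _ (psi \o phi) idfun; apply => [c|i].
  by change (psi (phi c%:MP) = c%:MP); rewrite phiC psiC.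
change (psi (phi 'X_i) = 'X_i).
case: (ord2P i) => ->; rewrite phiX; [rewrite hphi0 psiX|rewrite hphi1 psiY]; by [].
Qed.

Lemma phipsi x : phi (psi x) = x.
Proof.
have := @B_ext _ (phi \o psi) idfun; apply => [||c].
- by change (phi (psi 'X) = 'X); rewrite psiX phiX hphi0.
- by change (phi (psi 'X%:P) = 'X%:P); rewrite psiY phiX hphi1.
- by change (phi (psi c%:P%:P) = c%:P%:P); rewrite psiC phiC.
Qed.

Definition irrR (f : R) := [/\ f != 0, f \isn't a GRing.unit &
  forall x y : R, f = x * y -> x \is a GRing.unit \/ y \is a GRing.unit].
Definition primeR (f : R) := [/\ f != 0, f \isn't a GRing.unit &
  forall x y : R, mdvd f (x * y) -> mdvd f x \/ mdvd f y].

Lemma irr_primeR f : irrR f -> primeR f.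
Proof.
move=> [f0 fu Hf]; split => // x y [r Hr].
have Hi : irrB (phi f).
  split.
  - by apply: contra f0 => /eqP H; rewrite -(psiphi f) H rmorph0.
  - apply/negP => /(rmorph_unit psi); rewrite psiphi; exact/negP.
  - move=> x' y' E.
    have : f = psi x' * psi y' by rewrite -(psiphi f) E rmorphM.
    case/Hf => H; [left; rewrite -(phipsi x') | right; rewrite -(phipsi y')];
      exact: rmorph_unit.
have : dvdB (phi f) (phi x * phi y) by exists (phi r); rewrite -!rmorphM Hr.
case/(primeB Hi) => [[r' Hr']|[r' Hr']]; [left|right]; exists (psi r').
  by rewrite -(psiphi x) Hr' rmorphM psiphi.
by rewrite -(psiphi y) Hr' rmorphM psiphi.
Qed.

Lemma msize_gt0 (x : R) : x != 0 -> (0 < msize x)%N.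
Proof. by move=> x0; rewrite lt0n msize_poly_eq0. Qed.

Lemma natA (a b : nat) : (0 < a)%N -> (0 < b)%N -> ((a + b).-1).-1 = (a.-1 + b.-1)%N.
Proof. lia. Qed.
Lemma natB (a b : nat) : (0 < a)%N -> (0 < b)%N -> (a + b).-1 = 1%N -> a.-1 = 0%N.
Proof. lia. Qed.

Lemma tdegM (x y : R) : x != 0 -> y != 0 -> tdeg (x * y) = (tdeg x + tdeg y)%N.
Proof.
move=> x0 y0; rewrite /tdeg msizeM //.
apply: natA; exact: msize_gt0.
Qed.

Lemma tdeg_unit (x : R) : x \is a GRing.unit -> tdeg x = 0%N.
Proof.
move/unitrP => [y [Hyx Hxy]].
have x0 : x != 0 by apply: contra_eq_neq Hxy => ->; rewrite mul0r eq_sym oner_neq0.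
have y0 : y != 0 by apply: contra_eq_neq Hxy => ->; rewrite mulr0 eq_sym oner_neq0.
have := msizeM x0 y0; rewrite Hxy msize1 /tdeg.
by move=> H; apply: (natB (msize_gt0 x0) (msize_gt0 y0)).
Qed.

Lemma tdeg0_unit (x : R) : x != 0 -> tdeg x = 0%N -> x \is a GRing.unit.
Proof.
move=> x0 Hd.
have Hx : x = (x@_0)%:MP by apply: msize1_polyC; move: Hd; rewrite /tdeg; lia.
set c := x@_0 in Hx.
have c0 : c != 0 by apply: contraNneq x0 => E; rewrite Hx E.
apply/unitrP; exists (c^-1)%:MP; rewrite Hx -!mpolyCM mulVf // mulfV //.
Qed.

Lemma tdeg_pos (x : R) : x != 0 -> x \isn't a GRing.unit -> (0 < tdeg x)%N.
Proof.
move=> x0 xu; rewrite lt0n; apply/eqP => H.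
by move: xu; rewrite tdeg0_unit.
Qed.

Lemma exists_irrR n : forall p : R, (tdeg p <= n)%N -> p != 0 ->
  p \isn't a GRing.unit -> exists f, irrR f /\ mdvd f p.
Proof.
elim: n => [|n IH] p Hn p0 pu.
  by have := tdeg_pos p0 pu; lia.
case: (classic (irrR p)) => Hi.
  by exists p; split => //; exists 1; rewrite mul1r.
have [x [y [E [xu yu]]]] : exists x y, p = x * y /\ x \isn't a GRing.unit /\
    y \isn't a GRing.unit.
  apply: NNPP => H; apply: Hi; split => // x y E.
  case: (boolP (x \is a GRing.unit)) => [|xu]; first by left.
  case: (boolP (y \is a GRing.unit)) => [|yu]; first by right.
  by exfalso; apply: H; exists x, y.
have x0 : x != 0 by apply: contraNneq p0 => Ex; rewrite E Ex mul0r.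
have y0 : y != 0 by apply: contraNneq p0 => Ey; rewrite E Ey mulr0.
have := tdegM x0 y0; rewrite -E => Ed.
have := tdeg_pos y0 yu => Hy.
have [f [Hf [r Hr]]] := IH x ltac:(lia) x0 xu.
by exists f; split => //; exists (r * y); rewrite E Hr mulrAC.
Qed.

Lemma not_const (p : R) : ~ is_const p -> p != 0 /\ p \isn't a GRing.unit.
Proof.
move=> Hc; split.
  by apply/negP => /eqP E; apply: Hc; exists 0; rewrite E (rmorph0 (@mpolyC 2 F)).
apply/negP => /tdeg_unit Hd; apply: Hc; exists p@_0; apply: msize1_polyC.
by move: Hd; rewrite /tdeg; lia.
Qed.

End Iso.
Section Sigma.
Variable F : fieldType.
Local Notation R := {mpoly F[2]}.
Variables (s : {rmorphism F -> F}) (u v : F).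

Definition Sg : {rmorphism R -> R} := mmap (@mpolyC 2 F \o s) (sigma_var u v).

Lemma SgC c : Sg c%:MP = (s c)%:MP.
Proof. by rewrite /= mmapC. Qed.
Lemma SgA : Sg (alpha F) = beta F.
Proof. by rewrite /= mmapX mmap1U. Qed.
Lemma SgB : Sg (beta F) = u%:MP * alpha F + v%:MP * beta F.
Proof. by rewrite /= mmapX mmap1U. Qed.

Variables (s' : F -> F) (ss' : cancel s s') (s's : cancel s' s) (u0 : u != 0).

Definition sinv := s'.
HB.instance Definition _ := GRing.isZmodMorphism.Build F F sinv (can2_zmod_morphism ss' s's).
HB.instance Definition _ := GRing.isMonoidMorphism.Build F F sinv (can2_monoid_morphism ss' s's).

Definition tvar (i : 'I_2) : R :=
  if i == 0 then (sinv (- v / u))%:MP * alpha F + (sinv u^-1)%:MP * beta F else alpha F.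
Definition Tg : {rmorphism R -> R} := mmap (@mpolyC 2 F \o sinv) tvar.

Lemma TgC c : Tg c%:MP = (sinv c)%:MP.
Proof. by rewrite /= mmapC. Qed.
Lemma TgA : Tg (alpha F) = (sinv (- v / u))%:MP * alpha F + (sinv u^-1)%:MP * beta F.
Proof. by rewrite /= mmapX mmap1U. Qed.
Lemma TgB : Tg (beta F) = alpha F.
Proof. by rewrite /= mmapX mmap1U. Qed.

Lemma XA : 'X_(0 : 'I_2) = alpha F. Proof. by []. Qed.
Lemma XB : 'X_(1 : 'I_2) = beta F. Proof. by []. Qed.

Lemma TS x : Tg (Sg x) = x.
Proof.
have := @mp_ext _ _ (Tg \o Sg) idfun; apply => [c|i].
  by change (Tg (Sg c%:MP) = c%:MP); rewrite SgC TgC /sinv ss'.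
change (Tg (Sg 'X_i) = 'X_i).
case: (ord2P i) => ->; rewrite ?XA ?XB.
  by rewrite SgA TgB.
rewrite SgB rmorphD !rmorphM !TgC TgA TgB.
have e1 : sinv u * sinv (- v / u) + sinv v = 0.
  rewrite -rmorphM -rmorphD (_ : u * (- v / u) + v = 0) ?rmorph0 //.
  by rewrite mulrCA mulfV // mulr1 addNr.
have e2 : sinv u * sinv (u^-1) = 1 by rewrite -rmorphM mulfV ?rmorph1.
transitivity ((sinv u * sinv (- v / u) + sinv v)%:MP * alpha F
   + (sinv u * sinv u^-1)%:MP * beta F).
  by rewrite (rmorphD (@mpolyC 2 F)) !(rmorphM (@mpolyC 2 F)); ring.
by rewrite e1 e2 (rmorph0 (@mpolyC 2 F)) (rmorph1 (@mpolyC 2 F)) mul0r add0r mul1r.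
Qed.

Lemma ST x : Sg (Tg x) = x.
Proof.
have := @mp_ext _ _ (Sg \o Tg) idfun; apply => [c|i].
  by change (Sg (Tg c%:MP) = c%:MP); rewrite TgC SgC /sinv s's.
change (Sg (Tg 'X_i) = 'X_i).
case: (ord2P i) => ->; rewrite ?XA ?XB; last by rewrite TgB SgA.
rewrite TgA rmorphD !rmorphM !SgC SgA SgB /sinv !s's.
have e1 : u^-1 * u = 1 by rewrite mulVf.
have e2 : - v / u + u^-1 * v = 0 by rewrite mulNr [u^-1 * v]mulrC addNr.
transitivity ((u^-1 * u)%:MP * alpha F + (- v / u + u^-1 * v)%:MP * beta F).
  by rewrite (rmorphD (@mpolyC 2 F)) !(rmorphM (@mpolyC 2 F)); ring.
by rewrite e1 e2 (rmorph0 (@mpolyC 2 F)) (rmorph1 (@mpolyC 2 F)) mul0r addr0 mul1r.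
Qed.

Lemma Sinj : injective Sg.
Proof. exact: can_inj TS. Qed.

Lemma Sneq0 x : x != 0 -> Sg x != 0.
Proof. by apply: contraNneq => H; rewrite -(TS x) H rmorph0. Qed.

Lemma Sunit x : Sg x \is a GRing.unit -> x \is a GRing.unit.
Proof. by move=> H; rewrite -(TS x); exact: rmorph_unit. Qed.

Lemma Sdvd x y : mdvd x y -> mdvd (Sg x) (Sg y).
Proof. by move=> [r ->]; exists (Sg r); rewrite rmorphM. Qed.

Lemma Sdvd_rev x y : mdvd (Sg x) (Sg y) -> mdvd x y.
Proof. by move=> [r Hr]; exists (Tg r); apply: Sinj; rewrite rmorphM ST. Qed.

Lemma Sprime f : primeR f -> primeR (Sg f).
Proof.
move=> [f0 fu Hf]; split.
- exact: Sneq0.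
- by apply/negP => /Sunit; apply/negP.
- move=> x y H.
  have : mdvd (Sg f) (Sg (Tg x * Tg y)) by rewrite rmorphM !ST.
  move/Sdvd_rev/Hf => [H1|H1]; [left; rewrite -(ST x)|right; rewrite -(ST y)];
    exact: Sdvd.
Qed.

Lemma Sprime_rev t : primeR (Sg t) -> primeR t.
Proof.
move=> [f0 fu Hf]; split.
- by apply: contraNneq f0 => ->; rewrite rmorph0.
- by apply/negP => /(rmorph_unit Sg); apply/negP.
- move=> x y H.
  have : mdvd (Sg t) (Sg x * Sg y) by rewrite -rmorphM; exact: Sdvd.
  by move/Hf => [H1|H1]; [left|right]; exact: Sdvd_rev.
Qed.

Lemma iter_dvd k x y : mdvd x y -> mdvd (iter k Sg x) (iter k Sg y).
Proof. by elim: k => //= k IH H; apply: Sdvd; apply: IH. Qed.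

Lemma iter_neq0 k x : x != 0 -> iter k Sg x != 0.
Proof. by elim: k => //= k IH H; apply: Sneq0; apply: IH. Qed.

Lemma iter_nonunit k x : x \isn't a GRing.unit -> iter k Sg x \isn't a GRing.unit.
Proof.
elim: k => //= k IH H; apply/negP => /Sunit; apply/negP; exact: IH.
Qed.

Lemma mdvd_trans (x y z : R) : mdvd x y -> mdvd y z -> mdvd x z.
Proof. by move=> [r ->] [r' ->]; exists (r' * r); rewrite mulrA. Qed.

Section Main.
Variables (p q f0 : R) (f00 : f0 != 0) (f0u : f0 \isn't a GRing.unit) (f0p : mdvd f0 p).

Definition linked (f : R) := exists k, mdvd (iter k Sg f0) f \/ mdvd f0 (iter k Sg f).
Definition spread := (exists m, gcd_deg_pos p (iter m Sg q)) \/
                     (exists m, gcd_deg_pos q (iter m Sg p)).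

Lemma linkedS f : linked f -> linked (Sg f).
Proof.
case=> k [H|H].
  by exists k.+1; left; rewrite iterS; exact: Sdvd.
case: k H => [|k] H.
  by exists 1%N; left; exact: Sdvd.
by exists k; right; rewrite -iterSr.
Qed.

Lemma linkedT t : linked (Sg t) -> linked t.
Proof.
case=> k [H|H].
  case: k H => [|k] H.
    by exists 1%N; right.
  by exists k; left; apply: Sdvd_rev; rewrite -iterS.
by exists k.+1; right; rewrite iterSr.
Qed.

Lemma main n : forall a b P f, (tdeg a + tdeg b < n)%N -> a != 0 -> b != 0 ->
  P * a * Sg b = q * Sg a * b -> primeR f -> mdvd f P -> linked f -> spread.
Proof.
elim: n => [|n IH] a b P f Hn a0 b0 E Hf fP Hl; first by [].
case: (classic (mdvd f q)) => Hfq.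
  case: Hl => k [H|H].
    right; exists k; exists (iter k Sg f0); split.
      by apply: tdeg_pos; [exact: iter_neq0|exact: iter_nonunit].
    by split; [exact: mdvd_trans H Hfq|exact: iter_dvd].
  left; exists k; exists f0; split; first exact: tdeg_pos.
  by split => //; exact: mdvd_trans H (iter_dvd k Hfq).
have Hf' := Hf; case: Hf' => [fn0 fu Hpr].
move: fP => [P' EP].
have : mdvd f (q * (Sg a * b)).
  by exists (P' * a * Sg b); rewrite mulrA -E EP; ring.
case/Hpr => // H.
case/Hpr: H => [[r Hr]|[b' Hb']].
  set t := Tg f; set r' := Tg r.
  have Ef : f = Sg t by rewrite /t ST.
  have Er : r = Sg r' by rewrite /r' ST.
  clearbody t r'.
  have Ea : a = r' * t by apply: Sinj; rewrite rmorphM -Ef -Er Hr.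
  have t0 : t != 0 by apply: contraNneq fn0 => E0; rewrite Ef E0 rmorph0.
  have r'0 : r' != 0 by apply: contraNneq a0 => E0; rewrite Ea E0 mul0r.
  have tu : t \isn't a GRing.unit.
    by apply/negP => /(rmorph_unit Sg); rewrite -Ef; apply/negP.
  have St0 : Sg t != 0 by rewrite -Ef.
  apply: (IH r' b (P' * t) t).
  - have := tdegM r'0 t0; rewrite -Ea => Hd.
    have := tdeg_pos t0 tu; lia.
  - exact: r'0.
  - exact: b0.
  - apply: (mulIf St0).
    transitivity (P * a * Sg b); first by rewrite EP Ef Ea; ring.
    by rewrite E Ea rmorphM; ring.
  - by apply: Sprime_rev; rewrite -Ef.
  - by exists P'.
  - by apply: linkedT; rewrite -Ef.
have b'0 : b' != 0 by apply: contraNneq b0 => E0; rewrite Hb' E0 mul0r.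
apply: (IH a b' (P' * Sg f) (Sg f)).
- have := tdegM b'0 fn0; rewrite -Hb' => Hd.
  have := tdeg_pos fn0 fu; lia.
- exact: a0.
- exact: b'0.
- apply: (mulIf fn0).
  transitivity (P * a * Sg b); first by rewrite EP Hb' rmorphM; ring.
  by rewrite E Hb'; ring.
- exact: Sprime.
- by exists P'.
- exact: linkedS.
Qed.

End Main.
End Sigma.
Section Frac.
Local Open Scope quotient_scope.
Lemma frac_decomp (R : idomainType) (g : {fraction R}) :
  g = (\n_(repr g))%:F / (\d_(repr g))%:F.
Proof.
have d0 := denom_ratioP (repr g).
apply: (canRL (mulfK _)); first by rewrite tofrac_eq0.
set r := repr g.
have -> : g = \pi_({fraction R}) r by rewrite /r reprK.
unlock FracField.tofrac.
rewrite -[LHS]FracField.pi_mul.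
apply/eqmodP; rewrite /= FracField.equivfE /FracField.mulf /=.
by rewrite !numden_Ratio ?(oner_eq0, mulf_neq0, mul1r, mulr1) // mulrC.
Qed.
End Frac.

Lemma field_aux (K : fieldType) (P Q A B SA SB : K) : A != 0 -> B != 0 ->
  SB != 0 -> P = SA / SB / (A / B) * Q -> P * A * SB = Q * SA * B.
Proof. by move=> A0 B0 SB0 ->; field; rewrite A0 B0 SB0. Qed.
Lemma ring_aux (K : comRingType) (p q a b Sa Sb : K) :
  p * a * Sb = q * Sa * b -> q * b * Sa = p * Sb * a.
Proof. by move=> H; transitivity (q * Sa * b); [ring|rewrite -H; ring]. Qed.

Lemma mdvd_refl (F : fieldType) (x : {mpoly F[2]}) : mdvd x x.
Proof. by exists 1; rewrite mul1r. Qed.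

Theorem theorem2p4 (F : fieldType) (s : {rmorphism F -> F}) (u v : F)
  (s_bij : bijective s) (u_neq0 : u != 0)
  (g : {fraction {mpoly F[2]}}) (p q : {mpoly F[2]}) :
  g != 0 -> p != 0 -> q != 0 -> coprime_mp p q ->
  sigmaR s u v g / g = p%:F / q%:F ->
  (is_const p /\ is_const q) \/
  ((exists m : nat, in_Spr s u v p q m) \/ (exists m : nat, in_Spr s u v q p m)).
Proof.
move=> g0 p0 q0 Hcop Heq.
case: s_bij => s' ss' s's.
have Eg := frac_decomp g.
set a := \n_(repr g) in Eg.
set b := \d_(repr g) in Eg.
have b0 : b != 0 := denom_ratioP _.
have a0 : a != 0.
  by apply: contraNneq g0 => E0; rewrite Eg E0 tofrac0 mul0r.
have Hsig : sigmaR s u v g = (Sg s u v a)%:F / (Sg s u v b)%:F by [].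
clearbody a b.
have Sa0 : Sg s u v a != 0 := Sneq0 v ss' s's u_neq0 a0.
have Sb0 : Sg s u v b != 0 := Sneq0 v ss' s's u_neq0 b0.
have E : p * a * Sg s u v b = q * Sg s u v a * b.
  apply/eqP; rewrite -tofrac_eq !tofracM; apply/eqP.
  move: Heq; rewrite Hsig {1}Eg => Heq.
  have Hp : p%:F = (Sg s u v a)%:F / (Sg s u v b)%:F / (a%:F / b%:F) * q%:F.
    by rewrite Heq divfK // tofrac_eq0.
  by apply: field_aux Hp; rewrite tofrac_eq0.
have E' : q * b * Sg s u v a = p * Sg s u v b * a.
  exact: ring_aux E.
case: (classic (is_const p /\ is_const q)) => [H|Hnc]; first by left.
right.
case: (classic (is_const p)) => Hp.
  have Hq : ~ is_const q by move=> Hq; apply: Hnc.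
  have [q0' qu] := not_const Hq.
  have [f0 [Hirr Hdiv]] := exists_irrR (leqnn _) q0' qu.
  have Hpr := irr_primeR Hirr.
  have Hpr' := Hpr; case: Hpr' => f00 f0u _.
  have := main ss' s's u_neq0 f00 f0u Hdiv
    (ltnSn _) b0 a0 E' Hpr Hdiv (ex_intro _ 0%N (or_introl (mdvd_refl f0))).
  by case=> [[m H]|[m H]]; [right|left]; exists m; exact: H.
have [p0' pu] := not_const Hp.
have [f0 [Hirr Hdiv]] := exists_irrR (leqnn _) p0' pu.
have Hpr := irr_primeR Hirr.
have Hpr' := Hpr; case: Hpr' => f00 f0u _.
have := main ss' s's u_neq0 f00 f0u Hdiv
  (ltnSn _) a0 b0 E Hpr Hdiv (ex_intro _ 0%N (or_introl (mdvd_refl f0))).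
by case=> [[m H]|[m H]]; [left|right]; exists m; exact: H.
Qed.
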